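(* Let $\varphi\neq0$ and $\phi$ be real numbers and $$M_A=\begin{pmatrix} i\cosh\varphi & e^{i\phi}\sinh\varphi\\ e^{-i\phi}\sinh\varphi & -i\cosh\varphi\end{pmatrix},\qquad M_B=\begin{pmatrix} i&0\\0&-i\end{pmatrix}.$$ Let $M_1,M_2,\dots$ be independent random matrices, each equal to $M_A$ or $M_B$ with probability $1/2$, and let $\Pi_n=M_1\cdots M_n$. Then the Lyapunov exponent vanishes: $$\lambda_L=\lim_{n\to\infty}\frac1n\mathbb{E}\left(\log\|\Pi_n\|_F\right)=0.$$
   Context: $\|\cdot\|_F$ is the Frobenius norm, $\|M\|_F=(\sum_{i,j}|M_{ij}|^2)^{1/2}$. $\mathbb{E}$ denotes expectation over the random choices of $M_1,\dots,M_n$. *)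

(* Defs.v *)
From HB Require Import structures.
From mathcomp Require Import all_boot all_order all_algebra.
From mathcomp Require Import all_classical all_reals all_analysis.
From mathcomp Require Import complex.
Set Implicit Arguments. Unset Strict Implicit. Unset Printing Implicit Defensive.
Import Order.TTheory GRing.Theory Num.Theory.
Local Open Scope ring_scope.
Local Open Scope complex_scope.

Section Defs.
Variable R : realType.

Definition coshR (x : R) : R := (expR x + expR (- x)) / 2.
Definition sinhR (x : R) : R := (expR x - expR (- x)) / 2.

Definition cexpi (t : R) : R[i] := (cos t) +i* (sin t).

Definition cabs2 (z : R[i]) : R := complex.Re z ^+ 2 + complex.Im z ^+ 2.

Definition frob (M : 'M[R[i]]_2) : R :=
  Num.sqrt (\sum_(i < 2) \sum_(j < 2) cabs2 (M i j)).

Definition MA (vphi phi : R) : 'M[R[i]]_2 :=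
  \matrix_(i < 2, j < 2)
    if (i == 0) && (j == 0) then 'i * (coshR vphi)%:C
    else if (i == 0) && (j == 1) then cexpi phi * (sinhR vphi)%:C
    else if (i == 1) && (j == 0) then cexpi (- phi) * (sinhR vphi)%:C
    else - 'i * (coshR vphi)%:C.

Definition MB : 'M[R[i]]_2 :=
  \matrix_(i < 2, j < 2)
    if (i == 0) && (j == 0) then 'i
    else if (i == 1) && (j == 1) then - 'i
    else 0.

Definition Msel (vphi phi : R) (b : bool) : 'M[R[i]]_2 :=
  if b then MA vphi phi else MB.

Definition prodM (vphi phi : R) (n : nat) (s : {ffun 'I_n -> bool}) : 'M[R[i]]_2 :=
  \prod_(k < n) Msel vphi phi (s k).

(* E(log ||Pi_n||_F) where M_1..M_n are i.i.d. uniform on {M_A, M_B}: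
   average over all 2^n equally likely choice sequences. *)
Definition expected_log_frob (vphi phi : R) (n : nat) : R :=
  (2 ^+ n)^-1 * \sum_(s : {ffun 'I_n -> bool}) ln (frob (prodM vphi phi s)).

End Defs.

(* Main.v *)
Require Import Defs.
From HB Require Import structures.
From mathcomp Require Import all_boot all_order all_algebra.
From mathcomp Require Import all_classical all_reals all_analysis.
From mathcomp Require Import complex.
From mathcomp Require Import ring lra zify.
Import Order.TTheory GRing.Theory Num.Theory.
Import numFieldNormedType.Exports.
Local Open Scope classical_set_scope.
Local Open Scope ring_scope.
Local Open Scope complex_scope.

Section S.
Variable R : realType.
Implicit Types x y : R[i].
Lemma ReM x y : complex.Re (x * y) = complex.Re x * complex.Re y - complex.Im x * complex.Im y.
Proof. by case: x => a b; case: y => c d. Qed.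
Lemma ImM x y : complex.Im (x * y) = complex.Re x * complex.Im y + complex.Im x * complex.Re y.
Proof. case: x => a b; case: y => c d; simpc. by []. Qed.
Lemma ReD x y : complex.Re (x + y) = complex.Re x + complex.Re y.
Proof. case: x => a b; case: y => c d; simpc. by []. Qed.
Lemma ImD x y : complex.Im (x + y) = complex.Im x + complex.Im y.
Proof. case: x => a b; case: y => c d; simpc. by []. Qed.
Lemma ReN x : complex.Re (- x) = - complex.Re x.
Proof. by case: x => a b. Qed.
Lemma ImN x : complex.Im (- x) = - complex.Im x.
Proof. by case: x => a b. Qed.
Lemma Re0 : complex.Re (0 : R[i]) = 0. Proof. by []. Qed.
Lemma Im0 : complex.Im (0 : R[i]) = 0. Proof. by []. Qed.
Lemma Re1 : complex.Re (1 : R[i]) = 1. Proof. by []. Qed.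
Lemma Im1 : complex.Im (1 : R[i]) = 0. Proof. by []. Qed.
Lemma ReC (a : R) : complex.Re (a%:C) = a. Proof. by []. Qed.
Lemma ImC (a : R) : complex.Im (a%:C) = 0. Proof. by []. Qed.
Lemma Rei : complex.Re ('i : R[i]) = 0. Proof. by []. Qed.
Lemma Imi : complex.Im ('i : R[i]) = 1. Proof. by []. Qed.
Lemma Recx (a b : R) : complex.Re (a +i* b) = a. Proof. by []. Qed.
Lemma Imcx (a b : R) : complex.Im (a +i* b) = b. Proof. by []. Qed.
Lemma eqC x y : complex.Re x = complex.Re y -> complex.Im x = complex.Im y -> x = y.
Proof. by case: x => a b; case: y => c d /= -> ->. Qed.
Definition cE := (ReM, ImM, ReD, ImD, ReN, ImN, Re0, Im0, Re1, Im1, ReC, ImC, Rei, Imi, Recx, Imcx).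

Lemma coshsinh (v : R) : coshR v ^+ 2 - sinhR v ^+ 2 = 1.
Proof.
rewrite /coshR /sinhR.
have h : expR v * expR (- v) = 1 by rewrite -expRD subrr expR0.
set a := expR v in h *; set b := expR (-v) in h *. rewrite -[RHS]h; clearbody a b; by field.
Qed.
Lemma cossin (t : R) : cos t ^+ 2 + sin t ^+ 2 = 1.
Proof. by rewrite addrC sin2cos2 subrK. Qed.

Variables (vphi phi : R).
Notation A := (MA vphi phi).
Notation B := (MB R).


Lemma AA : A * A = -1.
Proof.
have h1 := coshsinh vphi. have h2 := cossin phi.
have h3 : (cos phi ^+ 2 + sin phi ^+ 2) * sinhR vphi ^+ 2 = sinhR vphi ^+ 2 by rewrite h2 mul1r.
apply/matrixP => i j; rewrite !mxE ?big_ord_recl ?big_ord0 ?mxE.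
move: i j => [[|[|i]] Hi] [[|[|j]] Hj] //=.
all: apply: eqC; rewrite /cexpi !cE ?cosN ?sinN.
all: lra.
Qed.

Lemma BB : B * B = -1.
Proof.
apply/matrixP => i j; rewrite !mxE ?big_ord_recl ?big_ord0 ?mxE.
move: i j => [[|[|i]] Hi] [[|[|j]] Hj] //=.
all: apply: eqC; rewrite !cE; lra.
Qed.

Notation C1 := (A * B).
Notation C2 := (B * A).
Lemma C12 : C1 * C2 = 1.
Proof. by rewrite mulrA -(mulrA A B B) BB mulrN1 mulNr AA opprK. Qed.
Lemma C21 : C2 * C1 = 1.
Proof. by rewrite mulrA -(mulrA B A A) AA mulrN1 mulNr BB opprK. Qed.

Definition Q (t : int) : 'M[R[i]]_2 := if 0 <= t then C2 ^+ absz (t) else C1 ^+ absz (t).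

Lemma QS t : Q t * C2 = Q (t + 1).
Proof.
rewrite /Q; case ht: (0 <= t).
  have -> : 0 <= t + 1 by lia.
  have -> : absz (t + 1) = (absz (t)).+1 by lia.
  by rewrite exprSr.
have e : absz (t) = (absz (t+1)).+1 by lia.
rewrite e exprSr -mulrA C12 mulr1.
case h2: (0 <= t+1) => //.
have -> : absz (t+1) = 0%N by lia.
by rewrite !expr0.
Qed.

Lemma QP t : Q t * C1 = Q (t - 1).
Proof.
rewrite /Q; case ht: (0 <= t).
  case h2: (0 <= t - 1).
    have e : absz (t) = (absz (t-1)).+1 by lia.
    by rewrite e exprSr -mulrA C21 mulr1.
  have -> : absz (t) = 0%N by lia.
  have -> : absz (t - 1) = 1%N by lia.
  by rewrite expr0 mul1r expr1.
have -> : (0 <= t - 1) = false by lia.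
have -> : absz (t - 1) = (absz (t)).+1 by lia.
by rewrite exprSr.
Qed.

Definition tt (f : nat -> bool) (m : nat) : int :=
  \sum_(k < m) (if f k then 0 else (-1) ^+ k).

Lemma struct (f : nat -> bool) m : exists g : nat,
  \prod_(k < m) Msel vphi phi (f k) = (-1) ^+ g * (Q (tt f m) * A ^+ odd m).
Proof.
elim: m => [|m [g IH]].
  by exists 0%N; rewrite big_ord0 /tt big_ord0 /Q /= !expr0 !mulr1.
rewrite big_ord_recr /= IH /tt big_ord_recr /= -/(tt f m).
set t := tt f m.
case hf: (f m); rewrite /Msel; case ho: (odd m) => /=.
- exists g.+1. rewrite addr0 expr1 expr0 mulr1 -!mulrA AA mulrN1.
  by rewrite exprS mulN1r mulNr mulrN.
- exists g. by rewrite addr0 expr0 expr1 mulr1 mulrA.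
- exists g. rewrite -(signr_odd _ m) ho expr1 -QP (expr0 A) mulr1.
  by rewrite -!mulrA.
- exists g.+1. have -> : (-1) ^+ m = 1 :> int by rewrite -(signr_odd _ m) ho.
  rewrite -QS expr1 expr0 mulr1.
  rewrite -(mulrA (Q t) (B * A) A) -(mulrA B A A) AA mulrN1 mulrN.
  by rewrite exprS mulN1r mulNr mulrN opprK mulrA.
Qed.

Definition nu (z : R[i]) : R := `|complex.Re z| + `|complex.Im z|.
Definition N (M : 'M[R[i]]_2) : R := \sum_(i < 2) \sum_(j < 2) nu (M i j).

Lemma nu_ge0 z : 0 <= nu z.
Proof. by rewrite /nu addr_ge0. Qed.
Lemma nuD x y : nu (x + y) <= nu x + nu y.
Proof.
rewrite /nu !cE.
have h1 := ler_normD (complex.Re x) (complex.Re y).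
have h2 := ler_normD (complex.Im x) (complex.Im y).
lra.
Qed.
Lemma nuM x y : nu (x * y) <= nu x * nu y.
Proof.
rewrite /nu !cE.
set a := complex.Re x; set b := complex.Im x; set c := complex.Re y; set d := complex.Im y.
have h1 : `|a * c - b * d| <= `|a| * `|c| + `|b| * `|d|.
  by rewrite -!normrM; apply: ler_normB.
have h2 : `|a * d + b * c| <= `|a| * `|d| + `|b| * `|c|.
  by rewrite -!normrM; apply: ler_normD.
lra.
Qed.
Lemma nuN x : nu (- x) = nu x.
Proof. by rewrite /nu !cE !normrN. Qed.
Lemma nu0 : nu 0 = 0.
Proof. by rewrite /nu !cE normr0 addr0. Qed.
Lemma nu1 : nu 1 = 1.
Proof. by rewrite /nu !cE normr0 normr1 addr0. Qed.

Notation o0 := (@ord0 1).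
Notation o1 := (lift (@ord0 1) (@ord0 0)).

Lemma NE M : N M = nu (M o0 o0) + nu (M o0 o1) + (nu (M o1 o0) + nu (M o1 o1)).
Proof. by rewrite /N !big_ord_recl !big_ord0 !addr0. Qed.

Lemma mulE (X Y : 'M[R[i]]_2) i j : (X * Y) i j = X i o0 * Y o0 j + X i o1 * Y o1 j.
Proof. by rewrite !mxE !big_ord_recl big_ord0 addr0. Qed.

Lemma N_mul X Y : N (X * Y) <= N X * N Y.
Proof.
have e i j : nu ((X * Y) i j) <= nu (X i o0) * nu (Y o0 j) + nu (X i o1) * nu (Y o1 j).
  rewrite mulE; apply: le_trans (nuD _ _) _; apply: lerD; exact: nuM.
rewrite !NE.
have := e o0 o0; have := e o0 o1; have := e o1 o0; have := e o1 o1.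
have := nu_ge0 (X o0 o0); have := nu_ge0 (X o0 o1); have := nu_ge0 (X o1 o0); have := nu_ge0 (X o1 o1).
have := nu_ge0 (Y o0 o0); have := nu_ge0 (Y o0 o1); have := nu_ge0 (Y o1 o0); have := nu_ge0 (Y o1 o1).
nra.
Qed.

Lemma N_ge0 M : 0 <= N M.
Proof. rewrite NE; have := nu_ge0 (M o0 o0); have := nu_ge0 (M o0 o1); have := nu_ge0 (M o1 o0); have := nu_ge0 (M o1 o1); lra. Qed.

Lemma NN M : N (- M) = N M.
Proof. by rewrite !NE !mxE !nuN. Qed.

Lemma Nsign g M : N ((-1) ^+ g * M) = N M.
Proof.
rewrite -signr_odd; case: (odd g); first by rewrite expr1 mulN1r NN.
by rewrite expr0 mul1r.
Qed.

Lemma N1 : N 1 = 2.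
Proof. rewrite NE !mxE /= nu0 nu1; lra. Qed.

Lemma N_exp X m : N (X ^+ m) <= 2 * N X ^+ m.
Proof.
elim: m => [|m IH]; first by rewrite !expr0 N1 mulr1.
rewrite !exprSr; apply: le_trans (N_mul _ _) _.
rewrite mulrA; apply: ler_wpM2r => //; exact: N_ge0.
Qed.

Lemma cabs2_nu z : cabs2 z <= nu z ^+ 2.
Proof.
rewrite /cabs2 /nu -(real_normK (num_real (complex.Re z))) -(real_normK (num_real (complex.Im z))).
have := normr_ge0 (complex.Re z); have := normr_ge0 (complex.Im z). nra.
Qed.

Lemma frobE (M : 'M[R[i]]_2) : frob M = Num.sqrt (cabs2 (M o0 o0) + cabs2 (M o0 o1) + (cabs2 (M o1 o0) + cabs2 (M o1 o1))).
Proof. by rewrite /frob !big_ord_recl !big_ord0 !addr0. Qed.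

Lemma frob_N (M : 'M[R[i]]_2) : frob M <= N M.
Proof.
rewrite frobE -(ger0_norm (N_ge0 M)) -sqrtr_sqr ler_sqrt ?sqr_ge0 // NE.
have := cabs2_nu (M o0 o0); have := cabs2_nu (M o0 o1); have := cabs2_nu (M o1 o0); have := cabs2_nu (M o1 o1).
have := nu_ge0 (M o0 o0); have := nu_ge0 (M o0 o1); have := nu_ge0 (M o1 o0); have := nu_ge0 (M o1 o1).
nra.
Qed.

Definition d2 (M : 'M[R[i]]_2) : R[i] := M o0 o0 * M o1 o1 - M o0 o1 * M o1 o0.

Lemma d2M X Y : d2 (X * Y) = d2 X * d2 Y.
Proof. rewrite /d2 !mulE. ring. Qed.

Lemma d2A : d2 A = 1.
Proof.
have h1 := coshsinh vphi. have h2 := cossin phi.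
have h3 : (cos phi ^+ 2 + sin phi ^+ 2) * sinhR vphi ^+ 2 = sinhR vphi ^+ 2 by rewrite h2 mul1r.
rewrite /d2 !mxE /=. apply: eqC; rewrite /cexpi !cE ?cosN ?sinN. all: lra.
Qed.

Lemma d2B : d2 B = 1.
Proof. rewrite /d2 !mxE /=. apply: eqC; rewrite !cE; lra. Qed.

Lemma frob_ge1 (M : 'M[R[i]]_2) : d2 M = 1 -> 1 <= frob M.
Proof.
move=> h; rewrite frobE -sqrtr1 ler_sqrt; last first.
  by rewrite /cabs2 !addr_ge0 ?sqr_ge0.
have := congr1 (@complex.Re R) h; rewrite /d2 !cE /cabs2 => {}h.
set a1 := complex.Re (M o0 o0) in h *; set a2 := complex.Im (M o0 o0) in h *.
set d1 := complex.Re (M o1 o1) in h *; set d2 := complex.Im (M o1 o1) in h *.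
set b1 := complex.Re (M o0 o1) in h *; set b2 := complex.Im (M o0 o1) in h *.
set c1 := complex.Re (M o1 o0) in h *; set c2 := complex.Im (M o1 o0) in h *.
have := sqr_ge0 (a1 - d1); have := sqr_ge0 (a2 + d2); have := sqr_ge0 (b1 + c1); have := sqr_ge0 (b2 - c2).
nra.
Qed.

Lemma d2_prod (f : nat -> bool) m : d2 (\prod_(k < m) Msel vphi phi (f k)) = 1.
Proof.
apply: (big_ind (fun M => d2 M = 1)).
- by rewrite /d2 !mxE /= mulr1 mulr0 subr0.
- by move=> x y hx hy; rewrite d2M hx hy mulr1.
- by move=> k _; rewrite /Msel; case: (f k); [exact: d2A | exact: d2B].
Qed.

Definition K := 1 + N C1 + N C2.
Lemma K_ge1 : 1 <= K.
Proof. have := N_ge0 C1; have := N_ge0 C2; rewrite /K; lra. Qed.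

Lemma NQ t : N (Q t) <= 2 * K ^+ absz t.
Proof.
have hK := K_ge1.
rewrite /Q; case: (0 <= t).
- apply: le_trans (N_exp _ _) _; rewrite ler_pM2l ?ltr0n //.
  apply: lerXn2r; [by rewrite nnegrE N_ge0 | by rewrite nnegrE; lra | have := N_ge0 C1; rewrite /K; lra].
- apply: le_trans (N_exp _ _) _; rewrite ler_pM2l ?ltr0n //.
  apply: lerXn2r; [by rewrite nnegrE N_ge0 | by rewrite nnegrE; lra | have := N_ge0 C2; rewrite /K; lra].
Qed.

Lemma frob_bound (f : nat -> bool) m :
  ln (frob (\prod_(k < m) Msel vphi phi (f k))) <=
  ln 2 + ln (2 + N A) + ln K * (absz (tt f m))%:R.
Proof.
set P := \prod_(k < m) _.
have h1 : 1 <= frob P by apply: frob_ge1; exact: d2_prod.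
have hK := K_ge1.
have hA := N_ge0 A.
have hb : frob P <= 2 * K ^+ absz (tt f m) * (2 + N A).
  have [g hg] := struct f m; rewrite /P hg.
  apply: le_trans (frob_N _) _; rewrite Nsign.
  apply: le_trans (N_mul _ _) _.
  apply: ler_pM; [exact: N_ge0 | exact: N_ge0 | exact: NQ |].
  case: (odd m); first by rewrite expr1; lra.
  by rewrite expr0 N1; lra.
have hKp : 0 < K by lra.
have hKm : 0 < K ^+ absz (tt f m) by rewrite exprn_gt0.
have hl : ln (frob P) <= ln (2 * K ^+ absz (tt f m) * (2 + N A)).
  by rewrite ler_ln // posrE ?mulr_gt0 //; lra.
apply: le_trans hl _.
rewrite !lnM ?posrE ?mulr_gt0 //; try lra.
rewrite lnXn // -mulr_natr. lra.
Qed.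

Definition fs {n} (s : {ffun 'I_n -> bool}) : nat -> bool :=
  fun k => if insub k is Some i then s i else true.
Lemma fsE n (s : {ffun 'I_n -> bool}) (i : 'I_n) : fs s i = s i.
Proof. by rewrite /fs valK. Qed.
Lemma prodM_fs n (s : {ffun 'I_n -> bool}) :
  prodM vphi phi s = \prod_(k < n) Msel vphi phi (fs s k).
Proof. by apply: eq_bigr => i _; rewrite fsE. Qed.

Definition w (b : bool) : R := if b then 1 else -1.
Definition S {n} (s : {ffun 'I_n -> bool}) : R := \sum_(k < n) (-1) ^+ k * w (s k).

Lemma sign_sum n : \sum_(k < n) (-1) ^+ k = (odd n)%:R :> R.
Proof.
elim: n => [|n IH]; first by rewrite big_ord0.
rewrite big_ord_recr /= IH -signr_odd; case: (odd n) => /=; rewrite ?expr1 ?expr0; lra.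
Qed.

Lemma tt_bound n (s : {ffun 'I_n -> bool}) : (absz (tt (fs s) n))%:R <= 1 + `|S s| :> R.
Proof.
rewrite natr_absz.
have e : (tt (fs s) n)%:~R = ((odd n)%:R - S s) / 2 :> R.
  rewrite /tt rmorph_sum -sign_sum /S -sumrB mulr_suml.
  apply: eq_bigr => k _; rewrite fsE /w; case: (s k) => /=.
  - by rewrite mulr1 subrr mul0r.
  - rewrite rmorphXn rmorphN1. lra.
rewrite intr_norm e.
have ho : 0 <= ((odd n)%:R : R) <= 1 by case: (odd n) => /=; rewrite ?ler01 ?lexx.
have h1 := ler_norm (S s).
have h2 : - S s <= `|S s| by rewrite -normrN ler_norm.
move/andP: ho => [ho1 ho2].
rewrite ler_norml; apply/andP; split; lra.
Qed.

Definition fl {n} (j : 'I_n) (s : {ffun 'I_n -> bool}) : {ffun 'I_n -> bool} :=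
  [ffun i => if i == j then ~~ s i else s i].
Lemma flK n (j : 'I_n) : involutive (fl j).
Proof. move=> s; apply/ffunP => i; rewrite !ffunE; case: (i == j) => //; exact: negbK. Qed.

Lemma pairsum n (j k : 'I_n) :
  \sum_(s : {ffun 'I_n -> bool}) ((-1) ^+ j * w (s j)) * ((-1) ^+ k * w (s k))
  = if j == k then 2 ^+ n else 0.
Proof.
case: eqP => [<-|/eqP hjk].
  rewrite (eq_bigr (fun _ => 1)); last first.
    move=> s _; rewrite mulrACA -exprD -signr_odd addnn odd_double expr0 mul1r /w.
    by case: (s j); rewrite ?mulr1 ?mulrNN ?mulr1.
  by rewrite sumr_const card_ffun card_bool card_ord natrX.
set X := \sum_s _.
have : X = - X.
  rewrite {1}/X (reindex_inj (inv_inj (@flK n j))) /= -sumrN.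
  apply: eq_bigr => s _; rewrite /fl !ffunE eqxx.
  have -> : (k == j) = false by apply/negbTE; rewrite eq_sym.
  rewrite /w; case: (s j) => /=; ring.
lra.
Qed.

Lemma sumS2 n : \sum_(s : {ffun 'I_n -> bool}) S s ^+ 2 = n%:R * 2 ^+ n.
Proof.
under eq_bigr do rewrite expr2 /S big_distrlr /=.
rewrite exchange_big /=.
under eq_bigr do rewrite exchange_big /=.
under eq_bigr do under eq_bigr do rewrite pairsum.
rewrite (eq_bigr (fun _ => 2 ^+ n)); last first.
  move=> j _; rewrite (bigD1 j) //= eqxx big1 ?addr0 // => k.
  by rewrite eq_sym => /negbTE ->.
by rewrite sumr_const card_ord mulr_natl.
Qed.

Lemma sumAbsS n : (0 < n)%N ->
  \sum_(s : {ffun 'I_n -> bool}) `|S s| <= Num.sqrt (n%:R : R) * 2 ^+ n.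
Proof.
move=> hn; set q := Num.sqrt (n%:R : R).
have hq : 0 < q by rewrite sqrtr_gt0 ltr0n.
have hq2 : q ^+ 2 = n%:R by rewrite sqr_sqrtr // ler0n.
have h : \sum_(s : {ffun 'I_n -> bool}) (`|S s| * (2 * q)) <=
         \sum_(s : {ffun 'I_n -> bool}) (S s ^+ 2 + q ^+ 2).
  apply: ler_sum => s _.
  have := sqr_ge0 (`|S s| - q); have := real_normK (num_real (S s)). nra.
rewrite -mulr_suml big_split /= sumS2 sumr_const card_ffun card_bool card_ord hq2 in h.
rewrite -[_ *+ (2 ^ n)%N]mulr_natr natrX in h.
set L := \sum_s _ in h *.
set P := (2 : R) ^+ n in h *.
have hP : 0 < P by rewrite exprn_gt0.
rewrite -hq2 in h.
nra.
Qed.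

Lemma key_sec : exists a b : R, 0 <= b /\ forall n : nat,
  0 <= expected_log_frob vphi phi n.+1 /\
  expected_log_frob vphi phi n.+1 <= a + b * Num.sqrt (n.+1%:R).
Proof.
have hb : 0 <= ln K := ln_ge0 K_ge1.
exists (ln 2 + ln (2 + N A) + ln K), (ln K); split => // n.
set m := n.+1.
have hP : 0 < (2 : R) ^+ m by rewrite exprn_gt0.
have hs : forall s : {ffun 'I_m -> bool},
    ln (frob (prodM vphi phi s)) <= (ln 2 + ln (2 + N A) + ln K) + ln K * `|S s|.
  move=> s; rewrite prodM_fs; apply: le_trans (frob_bound _ _) _.
  have := ler_wpM2l hb (tt_bound _ s); lra.
have hpos : forall s : {ffun 'I_m -> bool}, 0 <= ln (frob (prodM vphi phi s)).
  move=> s; apply: ln_ge0; rewrite prodM_fs; apply: frob_ge1; exact: d2_prod.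
rewrite /expected_log_frob; split.
  apply: mulr_ge0; [by rewrite invr_ge0 ltW | by apply: sumr_ge0 => s _; exact: hpos].
rewrite ler_pdivrMl //.
apply: le_trans (ler_sum _ (fun s _ => hs s)) _.
rewrite big_split /= sumr_const card_ffun card_bool card_ord -mulr_sumr.
have := @sumAbsS m (ltn0Sn n).
rewrite -[_ *+ (2 ^ m)%N]mulr_natr natrX.
move=> h; have := ler_wpM2l hb h. nra.
Qed.
End S.

Lemma key (R : realType) (vphi phi : R) : exists a b : R, 0 <= b /\ forall n : nat,
  0 <= expected_log_frob vphi phi n.+1 /\
  expected_log_frob vphi phi n.+1 <= a + b * Num.sqrt (n.+1%:R).
Proof. exact: key_sec. Qed.

Close Scope complex_scope.
Local Open Scope classical_set_scope.
Local Open Scope ring_scope.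

Theorem mainTheorem6 (R : realType) (vphi phi : R) (hvphi : vphi != 0) :
  (fun n : nat => (n%:R)^-1 * expected_log_frob vphi phi n) @ \oo --> (0 : R).
Proof.
have [a [b [b0 hb]]] := @key R vphi phi.
rewrite -cvg_shiftS /=.
have h0 : (fun n => a * @harmonic R n + b * Num.sqrt (harmonic n)) @ \oo --> (0:R).
  rewrite -[0 : R]addr0.
  apply: cvgD.
    rewrite -[0 : R](mulr0 a). apply: cvgMl_tmp. exact: cvg_harmonic.
  rewrite -[0 : R](mulr0 b). apply: cvgMl_tmp.
  rewrite -sqrtr0. exact: (continuous_cvg _ (@sqrt_continuous R 0) cvg_harmonic).
apply: (squeeze_cvgr _ (cvg_cst 0) h0).
apply: nearW => n /=.
have [e0 e1] := hb n.
have hn : 0 < (n.+1%:R : R) by rewrite ltr0n.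
apply/andP; split; first by rewrite mulr_ge0 // invr_ge0 ltW.
have hs : Num.sqrt (n.+1%:R : R) * (n.+1%:R)^-1 = Num.sqrt ((n.+1%:R)^-1).
  rewrite sqrtrV ?ltW //.
  have hq : 0 < Num.sqrt (n.+1%:R : R) by rewrite sqrtr_gt0.
  rewrite -{2}(sqr_sqrtr (ltW hn)) invfM mulrA divff ?mul1r //; exact: lt0r_neq0.
rewrite mulrC.
apply: le_trans (ler_wpM2r _ e1) _; first by rewrite invr_ge0 ltW.
by rewrite mulrDl -mulrA hs.
Qed.
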